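(* For every quadrilateral $Q$ in $K^2$, the symmetric bilinear form $\langle -,-\rangle_Q$ on $K^2$ is nondegenerate.
   Context: $K$ is a field of characteristic $\neq 2$. Every line $L$ in $K^2$ has an equation $tX-uY+v=0$ normalized so that $t=1$ if $u=0$ and $u=1$ if $u\neq 0$; coefficients denoted $t_L,u_L,v_L$. A quadrilateral $Q=ABA'B'$ consists of four distinct lines $A,B,A',B'$ (sides), not all through one point, with adjacent sides ($A,B$; $B,A'$; $A',B'$; $B',A$) not parallel; opposite sides may be parallel (three sides may be concurrent). Let $\alpha=t_Au_Bu_{A'}u_{B'}-u_At_Bu_{A'}u_{B'}+u_Au_Bt_{A'}u_{B'}-u_Au_Bu_{A'}t_{B'}$, $\beta=t_Au_Bt_{A'}u_{B'}-u_At_Bu_{A'}t_{B'}$, $\gamma=t_At_Bt_{A'}u_{B'}-t_At_Bu_{A'}t_{B'}+t_Au_Bt_{A'}t_{B'}-u_At_Bt_{A'}t_{B'}$, and $\langle \mathbf v,\mathbf w\rangle_Q=\mathbf v^T\begin{pmatrix}\gamma&-\beta\\-\beta&\alpha\end{pmatrix}\mathbf w$ for $\mathbf v,\mathbf w\in K^2$. *)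

(* Defs.v *)
From HB Require Import structures.
From mathcomp Require Import all_boot all_order all_algebra.
Set Implicit Arguments. Unset Strict Implicit. Unset Printing Implicit Defensive.
Import GRing.Theory.
Local Open Scope ring_scope.

(* A line in K^2, given by its normalized equation t X - u Y + v = 0,
   with t = 1 if u = 0, and u = 1 if u <> 0. *)
Record line (K : fieldType) := Line {
  t_L : K; u_L : K; v_L : K;
  line_norm : ((u_L == 0) && (t_L == 1)) || (u_L == 1) }.

Definition on_line (K : fieldType) (L : line K) (x y : K) : Prop :=
  t_L L * x - u_L L * y + v_L L = 0.

Definition parallel (K : fieldType) (L M : line K) : Prop :=
  t_L L * u_L M - u_L L * t_L M = 0.

Definition quadrilateral (K : fieldType) (A B A' B' : line K) : Prop :=
  (A <> B /\ A <> A' /\ A <> B' /\ B <> A' /\ B <> B' /\ A' <> B') /\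
  ~ (exists x y : K, on_line A x y /\ on_line B x y /\
                      on_line A' x y /\ on_line B' x y) /\
  ~ parallel A B /\ ~ parallel B A' /\ ~ parallel A' B' /\ ~ parallel B' A.

Definition alphaQ (K : fieldType) (A B A' B' : line K) : K :=
  t_L A * u_L B * u_L A' * u_L B' - u_L A * t_L B * u_L A' * u_L B'
  + u_L A * u_L B * t_L A' * u_L B' - u_L A * u_L B * u_L A' * t_L B'.

Definition betaQ (K : fieldType) (A B A' B' : line K) : K :=
  t_L A * u_L B * t_L A' * u_L B' - u_L A * t_L B * u_L A' * t_L B'.

Definition gammaQ (K : fieldType) (A B A' B' : line K) : K :=
  t_L A * t_L B * t_L A' * u_L B' - t_L A * t_L B * u_L A' * t_L B'
  + t_L A * u_L B * t_L A' * t_L B' - u_L A * t_L B * t_L A' * t_L B'.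

Definition formQ_mx (K : fieldType) (A B A' B' : line K) : 'M[K]_2 :=
  \matrix_(i < 2, j < 2)
    if (i == 0) && (j == 0) then gammaQ A B A' B'
    else if (i == 1) && (j == 1) then alphaQ A B A' B'
    else - betaQ A B A' B'.

Definition formQ (K : fieldType) (A B A' B' : line K) (v w : 'cV[K]_2) : K :=
  (v^T *m formQ_mx A B A' B' *m w) 0 0.

Definition nondegenerate_form (K : fieldType) (f : 'cV[K]_2 -> 'cV[K]_2 -> K) : Prop :=
  forall v : 'cV[K]_2, (forall w : 'cV[K]_2, f v w = 0) -> v = 0.

(* Main.v *)
Require Import Defs.
From mathcomp Require Import all_boot all_order all_algebra.
From mathcomp Require Import ring.
Local Open Scope ring_scope.
Import GRing.Theory.

Lemma det_id (K : fieldType) (A B A' B' : line K) :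
  alphaQ A B A' B' * gammaQ A B A' B' - betaQ A B A' B' ^+ 2 =
  - ((t_L A * u_L B - u_L A * t_L B) * (t_L B * u_L A' - u_L B * t_L A')
     * (t_L A' * u_L B' - u_L A' * t_L B') * (t_L B' * u_L A - u_L B' * t_L A)).
Proof. rewrite /alphaQ /betaQ /gammaQ; ring. Qed.

Lemma aux {K : comRingType} {x y a b g : K} :
  (x * g + (y * - b + 0)) * 1 + ((x * - b + (y * a + 0)) * 0 + 0) = 0 ->
  (x * g + (y * - b + 0)) * 0 + ((x * - b + (y * a + 0)) * 1 + 0) = 0 ->
  x * (a * g - b ^+ 2) = 0 /\ y * (a * g - b ^+ 2) = 0.
Proof.
move=> H0 H1; split.
- have -> : x * (a * g - b ^+ 2) =
    a * ((x * g + (y * - b + 0)) * 1 + ((x * - b + (y * a + 0)) * 0 + 0))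
    + b * ((x * g + (y * - b + 0)) * 0 + ((x * - b + (y * a + 0)) * 1 + 0)) by ring.
  by rewrite H0 H1 !mulr0 addr0.
- have -> : y * (a * g - b ^+ 2) =
    b * ((x * g + (y * - b + 0)) * 1 + ((x * - b + (y * a + 0)) * 0 + 0))
    + g * ((x * g + (y * - b + 0)) * 0 + ((x * - b + (y * a + 0)) * 1 + 0)) by ring.
  by rewrite H0 H1 !mulr0 addr0.
Qed.

Theorem lemma2p2 (K : fieldType) (hK : (2%:R : K) != 0)
  (A B A' B' : line K) :
  quadrilateral A B A' B' -> nondegenerate_form (formQ A B A' B').
Proof.
move=> [_ [_ [pAB [pBA' [pA'B' pB'A]]]]] v Hv.
have H0 := Hv (\col_k (k == 0)%:R).
have H1 := Hv (\col_k (k == 1)%:R).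
move: H0 H1; rewrite /formQ !mxE !big_ord_recl !big_ord0 !mxE !big_ord_recl !big_ord0 !mxE /=.
set a := alphaQ A B A' B'; set b := betaQ A B A' B'; set g := gammaQ A B A' B'.
move=> H0 H1.
have Hd : a * g - b ^+ 2 != 0.
  rewrite det_id oppr_eq0 !mulf_neq0 //; apply/eqP.
  - exact: pAB.
  - exact: pBA'.
  - exact: pA'B'.
  - exact: pB'A.
have [E0 E1] := (aux H0 H1).
apply/matrixP => i j; rewrite !mxE (ord1 j).
case: i => [[|[|//]] Hi].
- have -> : Ordinal Hi = 0 by apply: val_inj.
  by move/eqP: E0; rewrite mulf_eq0 (negbTE Hd) orbF => /eqP E; exact: E.
- have -> : Ordinal Hi = lift ord0 ord0 by apply: val_inj.
  by move/eqP: E1; rewrite mulf_eq0 (negbTE Hd) orbF => /eqP.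
Qed.
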